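(* Let $q=2^h$. In ${\rm PG}(4,q)$ with homogeneous coordinates $(X_1,\dots,X_5)$ let $\ell$ be the line $X_1=X_4=X_5=0$, $\Sigma$ the solid $X_1=0$, and $\mathcal H$ the hyperbolic quadric of $\Sigma$ with equation $X_2X_5+X_3X_4=0$. Let $\mathcal W(3,q)$ be the symplectic polar space of $\Sigma$ whose lines are the lines of $\Sigma$ that are totally isotropic for the alternating form $B(x,y)=x_2y_5+x_5y_2+x_3y_4+x_4y_3$ (these are the lines contained in $\mathcal H$ together with the lines of $\Sigma$ tangent to $\mathcal H$). Let $\mathcal T$ be the set of lines of $\mathcal W(3,q)$ having exactly one point in common with $\mathcal H\setminus\ell$. For $b\in{\rm GF}(q)$ let $$M_{1,b,1,0}=\begin{pmatrix}1&0&0&0&0\\0&1&0&b&0\\0&0&1&0&b\\0&0&0&1&0\\0&0&0&0&1\end{pmatrix},$$ and let $G_2=\{M_{1,b,1,0}: b\in{\rm GF}(q)\}$, acting on points (column vectors) by left multiplication. Then for every line $t\in\mathcal T$, the set $t^{G_2}\cup\{\ell\}$ is a regulus of $\Sigma$. *)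

(* Defs.v *)
(* Vectors are column vectors 'cV[F]_5; coordinates X_1..X_5 are entries 0..4.
   A projective subspace is represented by the set of its NONZERO vectors
   (this representation is canonical: equal subspaces give equal sets). *)
From HB Require Import structures.
From mathcomp Require Import all_boot all_order all_algebra.
Set Implicit Arguments. Unset Strict Implicit. Unset Printing Implicit Defensive.
Import Order.TTheory GRing.Theory.
Local Open Scope ring_scope.

Section PG4.
Variable F : finFieldType.
Local Notation V := 'cV[F]_5.

Definition X (i : nat) (v : V) : F := v (inord i.-1) 0.

Definition span2 (u w : V) : {set V} :=
  [set x | (x != 0) && [exists a : F, exists b : F, x == a *: u + b *: w]].

Definition is_line (S : {set V}) : Prop :=
  exists u w : V, \rank (row_mx u w) = 2%N /\ S = span2 u w.

Definition pt (v : V) : {set V} := (fun a : F => a *: v) @: [set a : F | a != 0].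
Definition points (S : {set V}) : {set {set V}} := pt @: S.

Definition ell : {set V} :=
  [set v : V | [&& v != 0, X 1 v == 0, X 4 v == 0 & X 5 v == 0]].
Definition Sigma : {set V} := [set v : V | (v != 0) && (X 1 v == 0)].
Definition Hq : {set V} :=
  [set v : V | [&& v != 0, X 1 v == 0 & X 2 v * X 5 v + X 3 v * X 4 v == 0]].

Definition B (x y : V) : F :=
  X 2 x * X 5 y + X 5 x * X 2 y + X 3 x * X 4 y + X 4 x * X 3 y.

Definition W3_line (t : {set V}) : Prop :=
  [/\ is_line t, t \subset Sigma & forall x y, x \in t -> y \in t -> B x y = 0].

Definition in_T (t : {set V}) : Prop :=
  W3_line t /\ #|points (t :&: (Hq :\: ell))| = 1%N.

Definition Mb (b : F) : 'M[F]_5 :=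
  \matrix_(i < 5, j < 5)
    ((i == j)%:R
     + (if ((i : nat) == 1%N) && ((j : nat) == 3%N) then b else 0)
     + (if ((i : nat) == 2%N) && ((j : nat) == 4%N) then b else 0)).

Definition orbitG2 (t : {set V}) : {set {set V}} :=
  [set (fun v : V => Mb b *m v) @: t | b : F].

Definition meet (m l : {set V}) : Prop := m :&: l != set0.

Definition regulus_of_Sigma (R : {set {set V}}) : Prop :=
  [/\ #|R| = #|F|.+1,
      forall l, l \in R -> is_line l /\ l \subset Sigma,
      forall l1 l2, l1 \in R -> l2 \in R -> l1 != l2 -> l1 :&: l2 = set0 &
      forall m, is_line m -> m \subset Sigma ->
        (exists l1 l2 l3, [/\ l1 \in R, l2 \in R, l3 \in R &
                              [/\ l1 != l2, l1 != l3 & l2 != l3]] /\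
                          [/\ meet m l1, meet m l2 & meet m l3]) ->
        forall l, l \in R -> meet m l].
End PG4.

(* Main.v *)
Require Import Defs.
From HB Require Import structures.
From mathcomp Require Import all_boot all_order all_algebra.
From mathcomp Require Import ring.
Set Implicit Arguments. Unset Strict Implicit. Unset Printing Implicit Defensive.
Import Order.TTheory GRing.Theory.
Local Open Scope ring_scope.

Section Core.
Variables (F : fieldType) (W : lmodType F).

Definition Lf (X Z : W) (s u : F) := s *: X + u *: Z.

Lemma Lcomb X Z a s u b s' u' :
  Lf X Z (a * s + b * s') (a * u + b * u') = a *: Lf X Z s u + b *: Lf X Z s' u'.
Proof.
rewrite /Lf !scalerDr !scalerA !scalerDl addrACA; congr (_ + _); by rewrite addrACA.
Qed.

Lemma Lcramer X Z s0 u0 s1 u1 s2 u2 :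
  (s0 * u1 - s1 * u0) *: Lf X Z s2 u2 =
  (s2 * u1 - s1 * u2) *: Lf X Z s0 u0 + (s0 * u2 - s2 * u0) *: Lf X Z s1 u1.
Proof.
rewrite /Lf !scalerDr !scalerA addrACA -!scalerDl.
congr (_ *: _ + _ *: _); ring.
Qed.

Lemma Ldep_s X Z s0 u0 s1 u1 :
  s1 *: Lf X Z s0 u0 - s0 *: Lf X Z s1 u1 = (s1 * u0 - s0 * u1) *: Z.
Proof.
rewrite /Lf !scalerDr !scalerA opprD -!scaleNr addrACA -!scalerDl.
rewrite -[RHS]add0r -(scale0r X); congr (_ *: _ + _ *: _); ring.
Qed.

Lemma Ldep_u X Z s0 u0 s1 u1 :
  u1 *: Lf X Z s0 u0 - u0 *: Lf X Z s1 u1 = (u1 * s0 - u0 * s1) *: X.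
Proof.
rewrite /Lf !scalerDr !scalerA opprD -!scaleNr addrACA -!scalerDl.
rewrite -[RHS]addr0 -(scale0r Z); congr (_ *: _ + _ *: _); ring.
Qed.

Lemma solve2 (y1 y2 : W) c1 c2 : c2 != 0 -> c1 *: y1 + c2 *: y2 = 0 ->
  y2 = (- (c1 / c2)) *: y1.
Proof.
move=> h2 h.
have e : c2 *: y2 = - (c1 *: y1) by apply/eqP; rewrite -addr_eq0 addrC h.
by rewrite -[y2]scale1r -(mulVf h2) -scalerA e scalerN scalerA -scaleNr mulrC.
Qed.

Lemma keyA (y1 y2 y3 : W) d e1 e2 b1 b2 b3 :
  d *: y3 = e1 *: y1 + e2 *: y2 -> d *: (b3 *: y3) = e1 *: (b1 *: y1) + e2 *: (b2 *: y2) ->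
  (e1 * (b1 - b3)) *: y1 + (e2 * (b2 - b3)) *: y2 = 0.
Proof.
move=> cy cp.
have -> : (e1 * (b1 - b3)) *: y1 + (e2 * (b2 - b3)) *: y2 =
     e1 *: (b1 *: y1) + e2 *: (b2 *: y2) - b3 *: (e1 *: y1 + e2 *: y2).
  rewrite scalerDr !scalerA opprD addrACA -!scalerBl.
  congr (_ *: _ + _ *: _); ring.
by rewrite -cp -cy !scalerA mulrC subrr.
Qed.

Lemma keyB (p0 y1 y2 : W) d e0 e1 b1 b2 :
  d *: y2 = e1 *: y1 -> d *: (b2 *: y2) = e0 *: p0 + e1 *: (b1 *: y1) ->
  e0 *: p0 = (e1 * (b2 - b1)) *: y1.
Proof.
move=> cy cp.
have -> : e0 *: p0 = d *: (b2 *: y2) - e1 *: (b1 *: y1) by rewrite cp addrK.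
have -> : d *: (b2 *: y2) = b2 *: (e1 *: y1) by rewrite scalerA mulrC -scalerA cy.
rewrite !scalerA -scalerBl; congr (_ *: _); ring.
Qed.

Variables (Yp Yr Pp Pr : W).
Notation Y := (Lf Yp Yr).
Notation P := (Lf Pp Pr).
Definition memb b s u := Y s u != 0 /\ P s u = b *: Y s u.

Lemma sub_case b1 b2 l s1 u1 s2 u2 : b1 != b2 -> memb b1 s1 u1 -> memb b2 s2 u2 ->
  Y s2 u2 = l *: Y s1 u1 ->
  (forall b, exists s u, memb b s u) /\ (exists s u, Y s u = 0 /\ P s u != 0).
Proof.
move=> hb [hy1 hp1] [hy2 hp2] hl.
have l0 : l != 0 by apply: contraNneq hy2 => l0; rewrite hl l0 scale0r.
have d0 : b2 - b1 != 0 by rewrite subr_eq0 eq_sym.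
split.
  move=> b; exists (l * (b2 - b) * s1 + (- (b1 - b)) * s2),
                   (l * (b2 - b) * u1 + (- (b1 - b)) * u2).
  rewrite /memb !Lcomb hp1 hp2 hl !scalerA -!scalerDl !scalerA; split.
    rewrite scaler_eq0 negb_or hy1 andbT.
    have -> : l * (b2 - b) + - (b1 - b) * l = l * (b2 - b1) by ring.
    by rewrite mulf_neq0.
  congr (_ *: _); ring.
exists (l * s1 + (-1) * s2), (l * u1 + (-1) * u2).
rewrite !Lcomb hp1 hp2 hl !scalerA -!scalerDl; split.
  by rewrite -[RHS](scale0r (Y s1 u1)); congr (_ *: _); ring.
rewrite scaler_eq0 negb_or hy1 andbT.
have -> : l * b1 + -1 * b2 * l = - (l * (b2 - b1)) by ring.
by rewrite oppr_eq0 mulf_neq0.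
Qed.

Lemma indep12 b1 b2 s1 u1 s2 u2 : b1 != b2 -> memb b1 s1 u1 -> memb b2 s2 u2 ->
  s1 * u2 - s2 * u1 != 0.
Proof.
move=> hb [hy1 hp1] [hy2 hp2]; apply/negP => /eqP d0.
have d0' : s2 * u1 - s1 * u2 = 0 by rewrite -opprB d0 oppr0.
have d0'' : u2 * s1 - u1 * s2 = 0 by rewrite -d0; ring.
have ys := Ldep_s Yp Yr s1 u1 s2 u2.
have ps := Ldep_s Pp Pr s1 u1 s2 u2.
have yu := Ldep_u Yp Yr s1 u1 s2 u2.
have pu := Ldep_u Pp Pr s1 u1 s2 u2.
rewrite d0' scale0r in ys; rewrite d0' scale0r in ps.
rewrite d0'' scale0r in yu; rewrite d0'' scale0r in pu.
move/eqP: ys; rewrite subr_eq0 => /eqP ys.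
move/eqP: ps; rewrite subr_eq0 hp1 hp2 => /eqP ps.
move/eqP: yu; rewrite subr_eq0 => /eqP yu.
move/eqP: pu; rewrite subr_eq0 hp1 hp2 => /eqP pu.
have hb' : b2 - b1 != 0 by rewrite subr_eq0 eq_sym.
have s10 : s1 = 0.
  have : (s1 * (b2 - b1)) *: Y s2 u2 = 0.
    rewrite mulrBr scalerBl -!scalerA -ps scalerA mulrC -scalerA ys.
    by rewrite !scalerA mulrC subrr.
  by move/eqP; rewrite scaler_eq0 (negbTE hy2) orbF mulf_eq0 (negbTE hb') orbF => /eqP.
have u10 : u1 = 0.
  have : (u1 * (b2 - b1)) *: Y s2 u2 = 0.
    rewrite mulrBr scalerBl -!scalerA -pu scalerA mulrC -scalerA yu.
    by rewrite !scalerA mulrC subrr.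
  by move/eqP; rewrite scaler_eq0 (negbTE hy2) orbF mulf_eq0 (negbTE hb') orbF => /eqP.
by move: hy1; rewrite /Lf s10 u10 !scale0r addr0 eqxx.
Qed.


Lemma indep01 b1 s0 u0 s1 u1 : Y s0 u0 = 0 -> P s0 u0 != 0 -> memb b1 s1 u1 ->
  s0 * u1 - s1 * u0 != 0.
Proof.
move=> hy0 hp0 [hy1 hp1]; apply/negP => /eqP d0.
have ys := Ldep_s Yp Yr s0 u0 s1 u1.
have yu := Ldep_u Yp Yr s0 u0 s1 u1.
have e1 : s1 * u0 - s0 * u1 = 0 by rewrite -oppr0 -d0 opprB.
have e2 : u1 * s0 - u0 * s1 = 0 by rewrite -d0; ring.
rewrite e1 scale0r hy0 scaler0 sub0r in ys.
rewrite e2 scale0r hy0 scaler0 sub0r in yu.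
move/eqP: ys; rewrite oppr_eq0 scaler_eq0 (negbTE hy1) orbF => /eqP s00.
move/eqP: yu; rewrite oppr_eq0 scaler_eq0 (negbTE hy1) orbF => /eqP u00.
by move: hp0; rewrite /Lf s00 u00 !scale0r addr0 eqxx.
Qed.

Lemma coreA b1 b2 b3 s1 u1 s2 u2 s3 u3 :
  b1 != b2 -> b1 != b3 -> b2 != b3 ->
  memb b1 s1 u1 -> memb b2 s2 u2 -> memb b3 s3 u3 ->
  (forall b, exists s u, memb b s u) /\ (exists s u, Y s u = 0 /\ P s u != 0).
Proof.
move=> h12 h13 h23 m1 m2 m3.
have d0 := indep12 h12 m1 m2.
case: m1 m2 m3 => [hy1 hp1] [hy2 hp2] [hy3 hp3].
have cy := Lcramer Yp Yr s1 u1 s2 u2 s3 u3.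
have cp := Lcramer Pp Pr s1 u1 s2 u2 s3 u3.
set d := s1 * u2 - s2 * u1 in d0 cy cp.
set e1 := s3 * u2 - s2 * u3 in cy cp.
set e2 := s1 * u3 - s3 * u1 in cy cp.
have key : (e1 * (b1 - b3)) *: Y s1 u1 + (e2 * (b2 - b3)) *: Y s2 u2 = 0.
  rewrite hp1 hp2 hp3 in cp; exact: keyA cy cp.
have [e20|e20] := eqVneq e2 0.
  rewrite e20 mul0r scale0r addr0 in key.
  move/eqP: key; rewrite scaler_eq0 (negbTE hy1) orbF mulf_eq0.
  rewrite [b1 - b3 == 0]subr_eq0 (negbTE h13) orbF => /eqP e10.
  move: cy; rewrite e10 e20 !scale0r addr0 => /eqP.
  by rewrite scaler_eq0 (negbTE d0) (negbTE hy3).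
have c20 : e2 * (b2 - b3) != 0 by rewrite mulf_neq0 // subr_eq0.
exact: (sub_case h12 (conj hy1 hp1) (conj hy2 hp2) (solve2 c20 key)).
Qed.

Lemma coreB b1 b2 s0 u0 s1 u1 s2 u2 : b1 != b2 ->
  Y s0 u0 = 0 -> P s0 u0 != 0 -> memb b1 s1 u1 -> memb b2 s2 u2 ->
  forall b, exists s u, memb b s u.
Proof.
move=> h12 hy0 hp0 m1 m2.
have d0 := indep01 hy0 hp0 m1.
case: m1 m2 => [hy1 hp1] [hy2 hp2].
have cy := Lcramer Yp Yr s0 u0 s1 u1 s2 u2.
have cp := Lcramer Pp Pr s0 u0 s1 u1 s2 u2.
set d := s0 * u1 - s1 * u0 in d0 cy cp.
set e0 := s2 * u1 - s1 * u2 in cy cp.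
set e1 := s0 * u2 - s2 * u0 in cy cp.
rewrite hy0 scaler0 add0r in cy.
have e10 : e1 != 0.
  apply: contraNneq hy2 => e10; move: cy; rewrite e10 scale0r => /eqP.
  by rewrite scaler_eq0 (negbTE d0).
have key : e0 *: P s0 u0 = (e1 * (b2 - b1)) *: Y s1 u1.
  rewrite hp2 hp1 in cp; exact: keyB cy cp.
move=> b.
exists ((b - b1) * e0 * s0 + (e1 * (b2 - b1)) * s1),
       ((b - b1) * e0 * u0 + (e1 * (b2 - b1)) * u1).
rewrite /memb !Lcomb hy0 scaler0 add0r; split.
  by rewrite scaler_eq0 negb_or hy1 andbT mulf_neq0 // subr_eq0 eq_sym.
rewrite -scalerA key hp1 !scalerA -scalerDl; congr (_ *: _); ring.
Qed.

End Core.

Section P2.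
Variable F : fieldType.
Definition pair2 (x y : F) : 'cV[F]_2 := \col_(i < 2) (if (i : nat) == 0%N then x else y).
Lemma p2_lin a b x y x' y' : a *: pair2 x y + b *: pair2 x' y' = pair2 (a * x + b * x') (a * y + b * y').
Proof. by apply/matrixP => i j; rewrite !mxE; case: ifP. Qed.
Lemma p2_scale a x y : a *: pair2 x y = pair2 (a * x) (a * y).
Proof. by apply/matrixP => i j; rewrite !mxE; case: ifP. Qed.
Lemma p2_eq x y x' y' : pair2 x y = pair2 x' y' <-> x = x' /\ y = y'.
Proof.
split; last by case=> -> ->.
move=> e; split.
  by have := congr1 (fun M : 'cV[F]_2 => M 0 0) e; rewrite !mxE.
by have := congr1 (fun M : 'cV[F]_2 => M 1 0) e; rewrite !mxE.
Qed.
Lemma p2_0 : pair2 0 0 = 0.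
Proof. by apply/matrixP => i j; rewrite !mxE; case: ifP. Qed.
End P2.

Section Coord.
Variable F : finFieldType.
Local Notation V := 'cV[F]_5.

Definition c (k : nat) (v : V) : F := v (inord k) 0.

Lemma XE i v : X i v = c i.-1 v. Proof. by []. Qed.
Lemma cD k (v w : V) : c k (v + w) = c k v + c k w. Proof. by rewrite /c mxE. Qed.
Lemma cZ k a (v : V) : c k (a *: v) = a * c k v. Proof. by rewrite /c mxE. Qed.
Lemma cN k (v : V) : c k (- v) = - c k v. Proof. by rewrite /c mxE. Qed.
Lemma c0 k : c k (0 : V) = 0. Proof. by rewrite /c mxE. Qed.

Lemma vec_ext (v w : V) : c 0 v = c 0 w -> c 1 v = c 1 w -> c 2 v = c 2 w ->
  c 3 v = c 3 w -> c 4 v = c 4 w -> v = w.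
Proof.
move=> h0 h1 h2 h3 h4; apply/matrixP => i j; rewrite (ord1 j).
have: forall k, (k < 5)%N -> c k v = c k w.
  by case=> [|[|[|[|[|]]]]].
by move/(_ i (ltn_ord i)); rewrite /c inord_val.
Qed.

Lemma cMb b (v : V) :
  [/\ c 0 (Mb b *m v) = c 0 v, c 1 (Mb b *m v) = c 1 v + b * c 3 v,
      c 2 (Mb b *m v) = c 2 v + b * c 4 v, c 3 (Mb b *m v) = c 3 v &
      c 4 (Mb b *m v) = c 4 v].
Proof.
have E : forall k, (k < 5)%N -> c k (Mb b *m v) = \sum_(j < 5) Mb b (inord k) j * v j 0.
  by move=> k _; rewrite /c mxE.
have o0 : (ord0 : 'I_5) = inord 0 by apply/val_inj; rewrite /= inordK.
have o1 : (lift ord0 ord0 : 'I_5) = inord 1 by apply/val_inj; rewrite /= inordK.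
have o2 : (lift ord0 (lift ord0 ord0) : 'I_5) = inord 2 by apply/val_inj; rewrite /= inordK.
have o3 : (lift ord0 (lift ord0 (lift ord0 ord0)) : 'I_5) = inord 3 by apply/val_inj; rewrite /= inordK.
have o4 : (lift ord0 (lift ord0 (lift ord0 (lift ord0 ord0))) : 'I_5) = inord 4 by apply/val_inj; rewrite /= inordK.
have ie : forall a e, (a < 5)%N -> (e < 5)%N -> (inord a == inord e :> 'I_5) = (a == e).
  by move=> a e ha hb; apply/eqP/eqP => [/(congr1 val)|->//]; rewrite /= !inordK.
rewrite !E //; rewrite !big_ord_recl !big_ord0 /c !mxE o4 o3 o2 o1 o0 !ie //=.
rewrite !inordK //=.
split; ring.
Qed.

Lemma mulRk (u w : V) (k : 'M[F]_(1 + 1, 1)) :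
  row_mx u w *m k = k (lshift 1 0) 0 *: u + k (rshift 1 0) 0 *: w.
Proof.
apply/matrixP=> i j; rewrite !mxE big_split_ord !big_ord1 row_mxEl row_mxEr (ord1 j).
by rewrite mulrC [w i 0 * _]mulrC.
Qed.

Lemma rank2P (u w : V) : \rank (row_mx u w) = 2%N <->
  (forall a b, a *: u + b *: w = 0 -> a = 0 /\ b = 0).
Proof.
split.
  move=> hr a b hab.
  have hf : row_free (row_mx u w)^T by rewrite /row_free mxrank_tr hr.
  pose k : 'M[F]_(1 + 1, 1) := col_mx a%:M b%:M.
  have ka : k (lshift 1 0) 0 = a by rewrite col_mxEu mxE mulr1n.
  have kb : k (rshift 1 0) 0 = b by rewrite col_mxEd mxE mulr1n.
  have : k^T *m (row_mx u w)^T == 0.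
  by rewrite -(trmx_mul (row_mx u w) k) mulRk ka kb hab trmx0.
  rewrite (mulmx_free_eq0 _ hf) => /eqP k0.
  have k0' : k = 0 by rewrite -[k]trmxK k0 trmx0.
  by rewrite -ka -kb k0' !mxE.
move=> hi.
rewrite -mxrank_tr; apply/eqP; apply: (@inj_row_free _ 2 5) => v hv.
have h : row_mx u w *m v^T = 0 by apply: trmx_inj; rewrite (trmx_mul (row_mx u w) v^T) trmxK hv trmx0.
rewrite mulRk in h; have [h1 h2] := hi _ _ h.
apply/matrixP => i j; rewrite (ord1 i) mxE.
case: j => [[|[|//]] Hj].
  have -> : Ordinal Hj = lshift 1 (0 : 'I_1) by apply/val_inj.
  by move: h1; rewrite mxE.
have -> : Ordinal Hj = rshift 1 (0 : 'I_1) by apply/val_inj.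
by move: h2; rewrite mxE.
Qed.
End Coord.

Lemma span2P (F : finFieldType) (u w z : 'cV[F]_5) :
  z \in span2 u w <-> z != 0 /\ exists a e, z = a *: u + e *: w.
Proof.
rewrite inE; split.
  by case/andP => -> /existsP [a /existsP [e /eqP ->]]; split => //; exists a, e.
case=> -> [a [e ->]]; apply/existsP; exists a; apply/existsP; exists e; done.
Qed.

Section Geom.
Variable F : finFieldType.
Local Notation V := 'cV[F]_5.
Variables (u w : V).
Hypotheses (u0 : c 0 u = 0) (w0 : c 0 w = 0).
Definition del := c 3 u * c 4 w - c 4 u * c 3 w.
Hypothesis hd : del != 0.

Definition al (z : V) := (c 4 w * c 3 z - c 3 w * c 4 z) / del.
Definition be (z : V) := (c 3 u * c 4 z - c 4 u * c 3 z) / del.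
Definition ps1 (z : V) := c 1 z - (al z * c 1 u + be z * c 1 w).
Definition ps2 (z : V) := c 2 z - (al z * c 2 u + be z * c 2 w).
Definition Yv (z : V) := pair2 (c 3 z) (c 4 z).
Definition Pv (z : V) := pair2 (ps1 z) (ps2 z).

Lemma z_eq0 (z : V) : c 0 z = 0 -> c 1 z = 0 -> c 2 z = 0 -> c 3 z = 0 -> c 4 z = 0 -> z = 0.
Proof. by move=> *; apply: vec_ext; rewrite c0. Qed.

Lemma Yv_lin s t (p r : V) : Yv (s *: p + t *: r) = Lf (Yv p) (Yv r) s t.
Proof. by rewrite /Yv /Lf p2_lin !cD !cZ. Qed.

Lemma Pv_lin s t (p r : V) : Pv (s *: p + t *: r) = Lf (Pv p) (Pv r) s t.
Proof. rewrite /Pv /Lf p2_lin /ps1 /ps2 /al /be !cD !cZ; congr pair2; ring. Qed.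

Lemma Yv0 z : Yv z = 0 <-> c 3 z = 0 /\ c 4 z = 0.
Proof. by rewrite /Yv -p2_0 p2_eq. Qed.

Lemma al_comb a e : al (a *: u + e *: w) = a.
Proof. rewrite /al !cD !cZ; move: hd; rewrite /del => hd'; field; exact: hd'. Qed.
Lemma be_comb a e : be (a *: u + e *: w) = e.
Proof. rewrite /be !cD !cZ; move: hd; rewrite /del => hd'; field; exact: hd'. Qed.



Definition Lb (b : F) : {set V} := (fun v : V => Mb b *m v) @: span2 u w.

Lemma LbP b (z : V) : z \in Lb b <-> [/\ z != 0, c 0 z = 0 & Pv z = b *: Yv z].
Proof.
split.
  case/imsetP => v /span2P [vn [a [e hv]]] ->.
  have [h0 h1 h2 h3 h4] := cMb b v.
  have hal : al (Mb b *m v) = a.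
    by rewrite -(al_comb a e) /al h3 h4 hv.
  have hbe : be (Mb b *m v) = e.
    by rewrite -(be_comb a e) /be h3 h4 hv.
  split.
  - apply: contraNneq vn => z0.
    have c3 : c 3 v = 0 by rewrite -h3 z0 c0.
    have c4 : c 4 v = 0 by rewrite -h4 z0 c0.
    have a0 : a = 0 by rewrite -hal /al h3 h4 c3 c4 !mulr0 subrr mul0r.
    have e0 : e = 0 by rewrite -hbe /be h3 h4 c3 c4 !mulr0 subrr mul0r.
    by rewrite hv a0 e0 !scale0r addr0.
  - by rewrite h0 hv cD !cZ u0 w0 !mulr0 addr0.
  - rewrite /Pv /Yv p2_scale /ps1 /ps2 hal hbe h1 h2 h3 h4 hv !cD !cZ.
    congr pair2; ring.
case=> zn z0; rewrite /Pv /Yv p2_scale => /p2_eq [e1 e2].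
apply/imsetP; exists (Mb (-b) *m z).
  apply/span2P; split.
    apply/negP => /eqP v0; move/negP: zn; apply; apply/eqP.
    have [h0 h1 h2 h3 h4] := cMb (-b) z.
    apply: z_eq0 => //; [| |by rewrite -h3 v0 c0|by rewrite -h4 v0 c0].
      have c3 : c 3 z = 0 by rewrite -h3 v0 c0.
      by move: h1; rewrite v0 c0 c3 mulr0 addr0 => <-.
    have c4 : c 4 z = 0 by rewrite -h4 v0 c0.
    by move: h2; rewrite v0 c0 c4 mulr0 addr0 => <-.
  exists (al z), (be z).
  have [h0 h1 h2 h3 h4] := cMb (-b) z.
  apply: vec_ext; rewrite ?cD ?cZ ?h0 ?h1 ?h2 ?h3 ?h4.
  - by rewrite z0 u0 w0 !mulr0 addr0.
  - by rewrite mulNr -e1 /ps1; ring.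
  - by rewrite mulNr -e2 /ps2; ring.
  - rewrite /al /be; move: hd; rewrite /del => hd'; field; exact: hd'.
  - rewrite /al /be; move: hd; rewrite /del => hd'; field; exact: hd'.
have [h0 h1 h2 h3 h4] := cMb (-b) z.
have [g0 g1 g2 g3 g4] := cMb b (Mb (-b) *m z).
apply: vec_ext; rewrite ?g0 ?g1 ?g2 ?g3 ?g4 ?h0 ?h1 ?h2 ?h3 ?h4 //; ring.
Qed.


Lemma Yv_0 : Yv 0 = 0. Proof. by rewrite /Yv !c0 p2_0. Qed.
Lemma Pv_0 : Pv 0 = 0.
Proof. by rewrite /Pv /ps1 /ps2 /al /be !c0 !mulr0 subrr !mul0r !addr0 subrr p2_0. Qed.

Lemma Lb_Y b z : z \in Lb b -> Yv z != 0.
Proof.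
case/LbP => zn z0 hP; apply/negP => /eqP /Yv0 [c3 c4].
move: hP; rewrite /Pv /Yv c3 c4 p2_scale !mulr0 => /p2_eq [e1 e2].
have hal : al z = 0 by rewrite /al c3 c4 !mulr0 subrr mul0r.
have hbe : be z = 0 by rewrite /be c3 c4 !mulr0 subrr mul0r.
move: e1 e2; rewrite /ps1 /ps2 hal hbe !mul0r !addr0 !subr0 => e1 e2.
by move/eqP: zn; apply; apply: z_eq0.
Qed.

Lemma ellP (z : V) : z \in ell F <-> [/\ z != 0, c 0 z = 0 & Yv z = 0].
Proof.
rewrite inE !XE /=; split.
  by case/and4P => -> /eqP -> /eqP h3 /eqP h4; split => //; apply/Yv0.
by case=> -> -> /Yv0 [-> ->]; rewrite !eqxx.
Qed.

Lemma ell_P z : z \in ell F -> Pv z != 0.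
Proof.
case/ellP => zn z0 /Yv0 [c3 c4]; apply/negP => /eqP.
rewrite /Pv -p2_0 => /p2_eq [e1 e2].
have hal : al z = 0 by rewrite /al c3 c4 !mulr0 subrr mul0r.
have hbe : be z = 0 by rewrite /be c3 c4 !mulr0 subrr mul0r.
move: e1 e2; rewrite /ps1 /ps2 hal hbe !mul0r !addr0 !subr0 => e1 e2.
by move/eqP: zn; apply; apply: z_eq0.
Qed.

Lemma Lb_disj b b' : b != b' -> Lb b :&: Lb b' = set0.
Proof.
move=> hb; apply/setP => z; rewrite inE in_set0; apply/negP => /andP [h h'].
have hy := Lb_Y h.
case/LbP: h => _ _ e; case/LbP: h' => _ _ e'.
move: hy; rewrite e' in e.
move/eqP: e; rewrite -subr_eq0 -scalerBl scaler_eq0 subr_eq0 eq_sym (negbTE hb) /=.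
by move=> ->.
Qed.

Lemma Lb_ell b : Lb b :&: ell F = set0.
Proof.
apply/setP => z; rewrite inE in_set0; apply/negP => /andP [h h'].
by move: (Lb_Y h); case/ellP: h' => _ _ ->; rewrite eqxx.
Qed.

Lemma Mb_eq0 b (x : V) : Mb b *m x = 0 -> x = 0.
Proof.
move=> h; have [h0 h1 h2 h3 h4] := cMb b x; rewrite h !c0 in h0 h1 h2 h3 h4.
have c3 : c 3 x = 0 by [].
have c4 : c 4 x = 0 by [].
apply: z_eq0 => //.
  by move: h1; rewrite c3 mulr0 addr0.
by move: h2; rewrite c4 mulr0 addr0.
Qed.

Hypothesis hi : forall a e, a *: u + e *: w = 0 -> a = 0 /\ e = 0.

Lemma Lb_line b : is_line (Lb b).
Proof.
exists (Mb b *m u), (Mb b *m w); split.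
  apply/rank2P => a e h; apply: hi; apply: (@Mb_eq0 b).
  by rewrite mulmxDr -!scalemxAr.
apply/setP => z; apply/idP/idP.
  case/imsetP => v /span2P [vn [a [e hv]]] ->; apply/span2P; split.
    by apply: contraNneq vn => /Mb_eq0 ->.
  by exists a, e; rewrite hv mulmxDr -!scalemxAr.
case/span2P => zn [a [e hz]]; apply/imsetP; exists (a *: u + e *: w).
  apply/span2P; split; last by exists a, e.
  by apply: contraNneq zn => h; rewrite hz !scalemxAr -mulmxDr h mulmx0.
by rewrite hz mulmxDr -!scalemxAr.
Qed.

Lemma Lb_sub b : Lb b \subset Sigma F.
Proof. by apply/subsetP => z /LbP [zn z0 _]; rewrite inE zn XE /= z0 eqxx. Qed.

Lemma Lb_n0 b : Lb b != set0.
Proof.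
apply/set0Pn; exists (Mb b *m u); apply/imsetP; exists u => //.
apply/span2P; split; last by exists 1, 0; rewrite scale1r scale0r addr0.
apply/negP => /eqP u00.
have [] := @hi 1 0; first by rewrite u00 scaler0 scale0r addr0.
by move=> /eqP; rewrite oner_eq0.
Qed.

Variables (p r : V).
Hypothesis hm : span2 p r \subset Sigma F.

Lemma meetL b : meet (span2 p r) (Lb b) <->
  exists s t, memb (Yv p) (Yv r) (Pv p) (Pv r) b s t.
Proof.
split.
  case/set0Pn => z; rewrite inE => /andP [/span2P [zn [s [t hz]]] hL].
  exists s, t; have hy := Lb_Y hL; case/LbP: hL => _ _ e.
  by rewrite /memb -Yv_lin -Pv_lin -hz.
case=> s [t [hy hp]]; apply/set0Pn; exists (s *: p + t *: r).
have zn : s *: p + t *: r != 0.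
  by apply: contraNneq hy => h; rewrite -Yv_lin h Yv_0.
have zm : s *: p + t *: r \in span2 p r by apply/span2P; split => //; exists s, t.
rewrite inE zm /=; apply/LbP; split => //.
  by move: (subsetP hm _ zm); rewrite inE XE => /andP [_ /eqP].
by rewrite Yv_lin Pv_lin.
Qed.

Lemma meetE : meet (span2 p r) (ell F) <->
  exists s t, Lf (Yv p) (Yv r) s t = 0 /\ Lf (Pv p) (Pv r) s t != 0.
Proof.
split.
  case/set0Pn => z; rewrite inE => /andP [/span2P [zn [s [t hz]]] hL].
  exists s, t; have hP := ell_P hL; case/ellP: hL => _ _ e.
  by rewrite -Yv_lin -Pv_lin -hz.
case=> s [t [hy hp]]; apply/set0Pn; exists (s *: p + t *: r).
have zn : s *: p + t *: r != 0.
  by apply: contraNneq hp => h; rewrite -Pv_lin h Pv_0.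
have zm : s *: p + t *: r \in span2 p r by apply/span2P; split => //; exists s, t.
rewrite inE zm /=; apply/ellP; split => //.
  by move: (subsetP hm _ zm); rewrite inE XE => /andP [_ /eqP].
by rewrite Yv_lin.
Qed.

End Geom.

Lemma reg_comb (F : eqType) (T : Type) (L : F -> T) (e : T) (M : T -> Prop) :
  (forall b1 b2 b3, b1 != b2 -> b1 != b3 -> b2 != b3 ->
     M (L b1) -> M (L b2) -> M (L b3) -> (forall b, M (L b)) /\ M e) ->
  (forall b1 b2, b1 != b2 -> M e -> M (L b1) -> M (L b2) -> forall b, M (L b)) ->
  forall l1 l2 l3, (l1 = e \/ exists b, l1 = L b) -> (l2 = e \/ exists b, l2 = L b) ->
  (l3 = e \/ exists b, l3 = L b) -> l1 <> l2 -> l1 <> l3 -> l2 <> l3 ->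
  M l1 -> M l2 -> M l3 -> forall l, (l = e \/ exists b, l = L b) -> M l.
Proof.
move=> hA hB l1 l2 l3 h1 h2 h3 n12 n13 n23 m1 m2 m3 l hl.
have ne : forall b b', L b <> L b' -> b != b' by move=> b b' h; apply/eqP => hb; apply: h; rewrite hb.
case: h1 => [e1|[b1 e1]]; case: h2 => [e2|[b2 e2]]; case: h3 => [e3|[b3 e3]]; subst.
- by case: n12.
- by case: n12.
- by case: n13.
- have hb := hB _ _ (ne _ _ n23) m1 m2 m3.
  by case: hl => [->|[b ->]].
- by case: n13.
- have hb := hB _ _ (ne _ _ n13) m2 m1 m3.
  by case: hl => [->|[b ->]].
- have hb := hB _ _ (ne _ _ n12) m3 m1 m2.
  by case: hl => [->|[b ->]].
- have [hb he] := hA _ _ _ (ne _ _ n12) (ne _ _ n13) (ne _ _ n23) m1 m2 m3.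
  by case: hl => [->|[b ->]].
Qed.

Lemma cdelta (F : finFieldType) k i : (k < 5)%N -> (i < 5)%N ->
  c k (delta_mx (inord i) 0 : 'cV[F]_5) = (k == i)%:R.
Proof.
move=> hk hi; rewrite /c mxE eqxx andbT.
have -> : (inord k == inord i :> 'I_5) = (k == i) => //.
have [->|ne] := eqVneq k i; first by rewrite eqxx.
apply: negbTE; apply: contra_neq ne => /(congr1 val).
by rewrite /= !inordK.
Qed.

Lemma ell_line (F : finFieldType) : is_line (ell F).
Proof.
pose e1 : 'cV[F]_5 := delta_mx (inord 1) 0.
pose e2 : 'cV[F]_5 := delta_mx (inord 2) 0.
exists e1, e2; split.
  apply/rank2P => a e h.
  have h1 := congr1 (c 1) h; have h2 := congr1 (c 2) h.
  rewrite !cD !cZ !cdelta // c0 /= mulr1 mulr0 addr0 in h1.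
  rewrite !cD !cZ !cdelta // c0 /= mulr1 mulr0 add0r in h2.
  by split.
apply/setP => z; apply/idP/idP.
  case/ellP => zn z0 /Yv0 [z3 z4]; apply/span2P; split => //.
  exists (c 1 z), (c 2 z); apply: vec_ext; rewrite !cD !cZ !cdelta //=;
  rewrite ?mulr0 ?mulr1 ?addr0 ?add0r //.
case/span2P => zn [a [e hz]]; apply/ellP; split => //; rewrite hz.
  by rewrite !cD !cZ !cdelta //= !mulr0 addr0.
by apply/Yv0; rewrite !cD !cZ !cdelta //= !mulr0 addr0.
Qed.

Lemma skew (F : finFieldType) (u w : 'cV[F]_5) :
  W3_line (span2 u w) -> #|points (span2 u w :&: (Hq F :\: ell F))| = 1%N ->
  forall z, z \in span2 u w -> z \notin ell F.
Proof.
case=> _ hsub hiso hcard z zt; apply/negP => ze.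
have [P hP] := cards1P (introT eqP hcard) .
have : P \in points (span2 u w :&: (Hq F :\: ell F)) by rewrite hP set11.
case/imsetP => v; rewrite in_setI in_setD => /and3P [vt vnell' vH] ePv.
have [zn z0 /Yv0 [z3 z4]] := (ellP z).1 ze.
have vn : v != 0 by move: vt; rewrite inE => /andP [].
have v0 : c 0 v = 0 by move: (subsetP hsub _ vt); rewrite inE => /andP [_ /eqP].
have hB := hiso z v zt vt.
have vzn : v + z != 0.
  apply/negP => /eqP e; move/negP: vnell'; apply; apply/ellP; split => //.
  have -> : v = - z by rewrite -[v]addr0 -(subrr z) addrA e add0r.
  by apply/Yv0; rewrite !cN z3 z4 oppr0.
have vzt : v + z \in span2 u w.
  case/span2P: vt => _ [a [e hv]]; case/span2P: zt => _ [a' [e' hz]].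
  apply/span2P; split; first exact: vzn.
  exists (a + a'), (e + e'); rewrite hv hz !scalerDl; by rewrite addrACA.
have vzH : v + z \in Hq F.
  rewrite inE vzn !XE /= !cD v0 z0 addr0 eqxx /=.
  move: vH; rewrite inE !XE /= => /and3P [_ _ /eqP hv].
  move: hB; rewrite /B !XE /= z3 z4 => hB.
  rewrite !addr0; apply/eqP.
  transitivity ((c 1 v * c 4 v + c 2 v * c 3 v) +
    (c 1 z * c 4 v + 0 * c 1 v + c 2 z * c 3 v + 0 * c 2 v)); first ring.
  by rewrite hv hB addr0.
have vznell : v + z \notin ell F.
  apply/negP => /ellP [_ _ /Yv0 [h3 h4]]; move/negP: vnell'; apply.
  apply/ellP; split => //; apply/Yv0; split.
    by move: h3; rewrite cD z3 addr0.
  by move: h4; rewrite cD z4 addr0.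
have : pt (v + z) \in points (span2 u w :&: (Hq F :\: ell F)).
  by apply/imsetP; exists (v + z) => //; rewrite in_setI in_setD vzt vzH vznell.
rewrite hP inE ePv => /eqP ept.
have : v + z \in pt (v + z).
  by apply/imsetP; exists 1; rewrite ?inE ?oner_eq0 ?scale1r.
rewrite ept => /imsetP [k]; rewrite inE => kn ek.
have [k1|k1] := eqVneq k 1.
  move: ek; rewrite k1 scale1r => /eqP; rewrite -{2}[v]addr0 => /eqP /addrI ez.
  by move: zn; rewrite ez eqxx.
move/negP: vnell'; apply; apply/ellP; split => //; apply/Yv0.
have k10 : k - 1 != 0 by rewrite subr_eq0.
have h3 := congr1 (c 3) ek; have h4 := congr1 (c 4) ek.
rewrite cD cZ z3 addr0 in h3; rewrite cD cZ z4 addr0 in h4.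
split.
  have : (k - 1) * c 3 v == 0 by rewrite mulrBl mul1r -h3 subrr.
  by rewrite mulf_eq0 (negbTE k10) /= => /eqP.
have : (k - 1) * c 4 v == 0 by rewrite mulrBl mul1r -h4 subrr.
by rewrite mulf_eq0 (negbTE k10) /= => /eqP.
Qed.

Theorem lemma3p2 (F : finFieldType) (h : nat) (hq : #|F| = (2 ^ h)%N)
  (t : {set 'cV[F]_5}) :
  in_T t -> regulus_of_Sigma (orbitG2 t :|: [set ell F]).
Proof.
case=> [[[u [w [hr ht]]] hsub hiso] hcard]; subst t.
have hW : W3_line (span2 u w) by split => //; exists u, w.
have hi := (rank2P u w).1 hr.
have hsk := skew hW hcard.
have u0 : c 0 u = 0.
  have [->|un] := eqVneq u 0; first exact: c0.
  have : u \in span2 u w.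
    by apply/span2P; split => //; exists 1, 0; rewrite scale1r scale0r addr0.
  by move/(subsetP hsub); rewrite inE XE => /andP [_ /eqP].
have w0 : c 0 w = 0.
  have [->|wn] := eqVneq w 0; first exact: c0.
  have : w \in span2 u w.
    by apply/span2P; split => //; exists 0, 1; rewrite scale1r scale0r add0r.
  by move/(subsetP hsub); rewrite inE XE => /andP [_ /eqP].
have hd : del u w != 0.
  apply/negP => /eqP hd0; rewrite /del in hd0.
  have [a [e [ne h3 h4]]] : exists a e, [/\ (a != 0) || (e != 0),
      a * c 3 u + e * c 3 w = 0 & a * c 4 u + e * c 4 w = 0].
    case: (boolP ((c 3 w != 0) || (c 3 u != 0))) => hh.
      exists (c 3 w), (- c 3 u); split; first by rewrite oppr_eq0.
        ring.
      transitivity (- (c 3 u * c 4 w - c 4 u * c 3 w)); first ring.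
      by rewrite hd0 oppr0.
    move: hh; rewrite negb_or !negbK => /andP [/eqP w3 /eqP u3].
    case: (boolP ((c 4 w != 0) || (c 4 u != 0))) => hh.
      exists (c 4 w), (- c 4 u); split; first by rewrite oppr_eq0.
        by rewrite w3 u3 !mulr0 addr0.
      ring.
    move: hh; rewrite negb_or !negbK => /andP [/eqP w4 /eqP u4].
    exists 1, 0; split; first by rewrite oner_eq0.
      by rewrite u3 w3 !mulr0 addr0.
    by rewrite u4 w4 !mulr0 addr0.
  have vn : a *: u + e *: w != 0.
    apply/negP => /eqP /hi [a0 e0]; by move: ne; rewrite a0 e0 eqxx.
  have vt : a *: u + e *: w \in span2 u w by apply/span2P; split => //; exists a, e.
  have : a *: u + e *: w \in ell F.
    apply/ellP; split => //; first by rewrite cD !cZ u0 w0 !mulr0 addr0.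
    by apply/Yv0; rewrite !cD !cZ.
  by rewrite (negbTE (hsk _ vt)).
set R := orbitG2 (span2 u w) :|: [set ell F].
have memR : forall l, l \in R -> l = ell F \/ exists b, l = Lb u w b.
  move=> l; rewrite in_setU in_set1 => /orP [/imsetP [b _ ->]|/eqP ->].
    by right; exists b.
  by left.
have LR : forall b, Lb u w b \in R.
  by move=> b; rewrite in_setU; apply/orP; left; apply/imsetP; exists b.
have eR : ell F \in R by rewrite in_setU in_set1 eqxx orbT.
have Linj : injective (Lb u w).
  move=> b b' e; apply/eqP; apply/negP => /negP nb.
  have := Lb_disj u0 w0 hd nb; rewrite e setIid => h0.
  by move: (Lb_n0 hi b'); rewrite h0 eqxx.
have ellS : ell F \subset Sigma F.
  by apply/subsetP => z /ellP [zn z0 _]; rewrite inE zn XE /= z0 eqxx.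
split.
- rewrite /R setUC cardsU1.
  have -> : ell F \notin orbitG2 (span2 u w).
    apply/negP => /imsetP [b _ eb].
    have := Lb_ell u0 w0 hd b; rewrite /Lb -eb setIid => h0.
    by move: (Lb_n0 hi b); rewrite /Lb -eb h0 eqxx.
  by rewrite card_imset.
- move=> l hl; case: (memR l hl) => [->|[b ->]]; split => //; first exact: ell_line.
    exact: Lb_line.
  exact: Lb_sub.
- move=> l1 l2 i1 i2 ne; have h1 := memR _ i1; have h2 := memR _ i2.
  case: h1 => [e1|[b1 e1]]; case: h2 => [e2|[b2 e2]]; subst.
  + by move: ne; rewrite eqxx.
  + by rewrite setIC Lb_ell.
  + by rewrite Lb_ell.
  + apply: Lb_disj => //; apply: contraNneq ne => ->; done.
- move=> m [p [r [_ ->]]] hm [l1 [l2 [l3 [[i1 i2 i3 [n12 n13 n23]] [m1 m2 m3]]]]] l hl.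
  refine (@reg_comb F _ (Lb u w) (ell F) (meet (span2 p r)) _ _ l1 l2 l3
             (memR _ i1) (memR _ i2) (memR _ i3)
             (fun e => negP n12 (introT eqP e)) (fun e => negP n13 (introT eqP e))
             (fun e => negP n23 (introT eqP e)) m1 m2 m3 l (memR _ hl)).
    move=> b1 b2 b3 h12 h13 h23 /(meetL u0 w0 hd hm) [s1 [t1 k1]]
      /(meetL u0 w0 hd hm) [s2 [t2 k2]] /(meetL u0 w0 hd hm) [s3 [t3 k3]].
    have [hA hE] := coreA h12 h13 h23 k1 k2 k3.
    split; first by move=> b; apply/(meetL u0 w0 hd hm); exact: hA.
    by apply/(meetE u w hm).
  move=> b1 b2 h12 /(meetE u w hm) [s0 [t0 [k01 k02]]]
    /(meetL u0 w0 hd hm) [s1 [t1 k1]] /(meetL u0 w0 hd hm) [s2 [t2 k2]] b.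
  apply/(meetL u0 w0 hd hm); exact: (coreB h12 k01 k02 k1 k2).
Qed.
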